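(* Let $d\ge3$ and consider the two-link parallel network with unit demand and latencies $\ell_1(x_1)=x_1^d$ and $\ell_2(x_2)=\left(\frac{d-1}{d}\right)^d$ (constant). Then $\mathcal{T}(c)\ne\emptyset$ if and only if $c\le\left(\frac{d-1}{d}\right)^{d-1}$; for such $c$, $\mathcal{T}(c)=\{(c,c)\}$ and the induced flow is $x(c)=x(0)=\left(\frac{d-1}{d},\frac1d\right)$. With the convention that $\sup_{t\in\emptyset}C(x(t))=\infty$, it follows that $$\inf_{c\in\mathbb{R}_+}\ \sup_{t\in\mathcal{T}(c)}\frac{C(x(t))}{C(x^* )}=\frac{(d+1)^{(d+1)/d}}{(d+1)^{(d+1)/d}-(d-1)},$$ where $x^*=\left(\frac{d-1}{d(d+1)^{1/d}},\,1-\frac{d-1}{d(d+1)^{1/d}}\right)$ is the optimal flow; this quantity tends to $\infty$ as $d\to\infty$.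
   Context: Flows $x\in\mathbb{R}^2_+$ with $x_1+x_2=1$; $C(x)=\sum_i\ell_i(x_i)x_i$; $x^*$ minimizes $C$. For tolls $t\in\mathbb{R}^2_+$, $x(t)$ is the unique Wardrop equilibrium for $t$ (for all $i,j$ with $x_i>0$: $\ell_i(x_i)+t_i\le\ell_j(x_j)+t_j$); $x(0)$ is the untolled one. Profit $\Pi_i(t)=t_ix_i(t)$. For $c\in\mathbb{R}_+$, $\mathcal{T}(c)$ is the set of toll vectors with $0\le t_i\le c$ such that for every $i$ and every $t'_i\in[0,c]$, $\Pi_i(t_i,t_{-i})\ge\Pi_i(t'_i,t_{-i})$ (flow recomputed as the Wardrop equilibrium). *)

(* Defs.v *)
From Stdlib Require Import Reals Lra ClassicalEpsilon.
Open Scope R_scope.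

Definition flow := (R * R)%type.
Definition tolls := (R * R)%type.

Definition Feasible (x : flow) : Prop :=
  0 <= fst x /\ 0 <= snd x /\ fst x + snd x = 1.

(** Wardrop equilibrium for tolls t (the cases i = j are trivial). *)
Definition IsWE (l1 l2 : R -> R) (t : tolls) (x : flow) : Prop :=
  Feasible x /\
  (0 < fst x -> l1 (fst x) + fst t <= l2 (snd x) + snd t) /\
  (0 < snd x -> l2 (snd x) + snd t <= l1 (fst x) + fst t).

(** x(t): "the" Wardrop equilibrium for t (Hilbert choice; it is unique). *)
Definition xflow (l1 l2 : R -> R) (t : tolls) : flow :=
  epsilon (inhabits (0, 0)) (IsWE l1 l2 t).

Definition Profit1 (l1 l2 : R -> R) (t : tolls) : R := fst t * fst (xflow l1 l2 t).
Definition Profit2 (l1 l2 : R -> R) (t : tolls) : R := snd t * snd (xflow l1 l2 t).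

Definition InT (l1 l2 : R -> R) (c : R) (t : tolls) : Prop :=
  (0 <= fst t <= c) /\ (0 <= snd t <= c) /\
  (forall t1', 0 <= t1' <= c -> Profit1 l1 l2 (t1', snd t) <= Profit1 l1 l2 t) /\
  (forall t2', 0 <= t2' <= c -> Profit2 l1 l2 (fst t, t2') <= Profit2 l1 l2 t).

Definition Cost (l1 l2 : R -> R) (x : flow) : R :=
  l1 (fst x) * fst x + l2 (snd x) * snd x.
Definition IsOpt (l1 l2 : R -> R) (x : flow) : Prop :=
  Feasible x /\ forall y, Feasible y -> Cost l1 l2 x <= Cost l1 l2 y.

Definition lat1 (d : nat) (x : R) : R := x ^ d.
Definition lat2 (d : nat) (_ : R) : R := ((INR d - 1) / INR d) ^ d.

(** Extended-real sup/inf, with sup over the empty set = +infinity.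
    [SupLe P f W] means  sup_{t | P t} f t <= W  (false if P is empty). *)
Definition SupLe (P : tolls -> Prop) (f : tolls -> R) (W : R) : Prop :=
  (exists t, P t) /\ forall t, P t -> f t <= W.

(** [IsInfSup P f V] means  inf_{c >= 0} sup_{t | P c t} f t = V  (V finite). *)
Definition IsInfSup (P : R -> tolls -> Prop) (f : tolls -> R) (V : R) : Prop :=
  (forall c, 0 <= c -> forall W, SupLe (P c) f W -> V <= W) /\
  (forall W, V < W -> exists c, 0 <= c /\ SupLe (P c) f W).

(* Main.v *)
Require Import Defs.
From Stdlib Require Import Reals Lra Psatz ZArith ClassicalEpsilon.
From Coquelicot Require Import Coquelicot.
Open Scope R_scope.

Lemma pow_diff_lb n w v : 0 <= w <= v -> INR (S n) * w ^ n * (v - w) <= v ^ (S n) - w ^ (S n).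
Proof.
  intros [Hw Hv]. induction n as [|n IH].
  - simpl; lra.
  - rewrite !S_INR. simpl pow in *. rewrite S_INR in IH.
    assert (0 <= w ^ n) by (apply pow_le; lra).
    assert (w ^ n <= v ^ n) by (apply pow_incr; lra).
    assert (0 <= INR n) by apply pos_INR.
    assert (E: v * (v * v ^ n) - w * (w * w ^ n) = v * (v * v^n - w * w^n) + w * w^n * (v - w)) by ring.
    rewrite E.
    assert (v * ((INR n + 1) * w ^ n * (v - w)) <= v * (v * v ^ n - w * w ^ n)) by (apply Rmult_le_compat_l; lra).
    assert (w * ((INR n + 1) * w ^ n * (v - w)) <= v * ((INR n + 1) * w ^ n * (v - w))).
    { apply Rmult_le_compat_r; [|lra]. apply Rmult_le_pos; [|lra]. apply Rmult_le_pos; lra. }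
    lra.
Qed.

Lemma pow_diff_ub n w v : 0 <= w <= v -> v ^ (S n) - w ^ (S n) <= INR (S n) * v ^ n * (v - w).
Proof.
  intros [Hw Hv]. induction n as [|n IH].
  - simpl; lra.
  - rewrite !S_INR. simpl pow in *. rewrite S_INR in IH.
    assert (0 <= w ^ n) by (apply pow_le; lra).
    assert (w ^ n <= v ^ n) by (apply pow_incr; lra).
    assert (0 <= INR n) by apply pos_INR.
    assert (E: v * (v * v ^ n) - w * (w * w ^ n) = v * (v * v^n - w * w^n) + w * w^n * (v - w)) by ring.
    rewrite E.
    assert (v * (v * v ^ n - w * w ^ n) <= v * ((INR n + 1) * v ^ n * (v - w))) by (apply Rmult_le_compat_l; lra).
    assert (w * w ^ n * (v - w) <= v * v ^ n * (v - w)).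
    { apply Rmult_le_compat_r; [lra|]. apply Rmult_le_compat; lra. }
    lra.
Qed.

Lemma pow_lt_strict n x y : 0 <= x < y -> x ^ (S n) < y ^ (S n).
Proof.
  intros [Hx Hy]. induction n as [|n IH]. simpl; lra.
  simpl pow in *. assert (0 <= x ^ n) by (apply pow_le; lra).
  apply Rle_lt_trans with (y * (x * x ^ n)).
  apply Rmult_le_compat_r; [apply Rmult_le_pos|]; lra.
  apply Rmult_lt_compat_l; lra.
Qed.

Lemma pow_diff_lb_strict n w v : 0 <= w < v -> INR (S (S n)) * w ^ (S n) * (v - w) < v ^ (S (S n)) - w ^ (S (S n)).
Proof.
  intros [Hw Hv]. induction n as [|n IH].
  - simpl. assert (0 < (v-w)*(v-w)) by (apply Rmult_lt_0_compat; lra). lra.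
  - rewrite (S_INR (S (S n))).
    set (k := INR (S (S n))) in *.
    change (v ^ S (S (S n))) with (v * v ^ (S (S n))).
    change (w ^ S (S (S n))) with (w * w ^ (S (S n))).
    change (w ^ S (S n)) with (w * w ^ (S n)) in *.
    set (X := w ^ S n) in *. set (Y := v ^ S (S n)) in *.
    assert (0 <= X) by (apply pow_le; lra).
    assert (0 <= k) by (apply pos_INR).
    assert (E: v * Y - w * (w * X) = v * (Y - w * X) + w * X * (v - w)) by ring.
    rewrite E.
    assert (v * (k * X * (v - w)) < v * (Y - w * X)) by (apply Rmult_lt_compat_l; lra).
    assert (w * (k * X * (v - w)) <= v * (k * X * (v - w))).
    { apply Rmult_le_compat_r; [|lra]. apply Rmult_le_pos; [|lra]. apply Rmult_le_pos; lra. }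
    lra.
Qed.

Lemma pow_diff_ub_strict n w v : 0 <= w < v -> v ^ (S (S n)) - w ^ (S (S n)) < INR (S (S n)) * v ^ (S n) * (v - w).
Proof.
  intros [Hw Hv]. induction n as [|n IH].
  - simpl. assert (0 < (v-w)*(v-w)) by (apply Rmult_lt_0_compat; lra). lra.
  - rewrite (S_INR (S (S n))).
    set (k := INR (S (S n))) in *.
    assert (Hlt: w ^ (S (S n)) < v ^ (S (S n))) by (apply pow_lt_strict; lra).
    assert (0 <= w ^ (S (S n))) by (apply pow_le; lra).
    change (v ^ S (S (S n))) with (v * v ^ (S (S n))).
    change (w ^ S (S (S n))) with (w * w ^ (S (S n))).
    change (v ^ S (S n)) with (v * v ^ (S n)) in *.
    set (X := v ^ S n) in *. set (Y := w ^ S (S n)) in *.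
    assert (0 <= X) by (apply pow_le; lra).
    assert (0 <= k) by (apply pos_INR).
    assert (E: v * (v * X) - w * Y = v * (v * X - Y) + Y * (v - w)) by ring.
    rewrite E.
    assert (v * (v * X - Y) <= v * (k * X * (v - w))) by (apply Rmult_le_compat_l; lra).
    assert (Y * (v - w) < v * X * (v - w)) by (apply Rmult_lt_compat_r; lra).
    lra.
Qed.

Lemma pow_diff_le1 n w v : 0 <= w <= v -> v <= 1 -> v ^ n - w ^ n <= INR n * (v - w).
Proof.
  intros H H1. destruct n. simpl; lra.
  pose proof (pow_diff_ub n w v H).
  assert (v ^ n <= 1) by (rewrite <- (pow1 n); apply pow_incr; lra).
  pose proof (pos_INR (S n)).
  assert (INR (S n) * v ^ n * (v - w) <= INR (S n) * 1 * (v - w)).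
  { apply Rmult_le_compat_r; [lra|]. apply Rmult_le_compat_l; lra. }
  lra.
Qed.

Lemma deriv_right f x l : derivable_pt_lim f x l -> 0 < l -> forall e, 0 < e ->
  exists h, 0 < h < e /\ f x < f (x + h).
Proof.
  intros Hd Hl e He.
  destruct (Hd (l/2) ltac:(lra)) as [del Hdel].
  pose (h := Rmin e del / 2).
  assert (Hm1: Rmin e del <= e) by apply Rmin_l.
  assert (Hm2: Rmin e del <= del) by apply Rmin_r.
  assert (Hm0: 0 < Rmin e del) by (apply Rmin_glb_lt; [lra| apply cond_pos]).
  exists h. assert (0 < h) by (unfold h; lra). split. unfold h; lra.
  assert (Hh: Rabs h < del) by (rewrite Rabs_right; unfold h; lra).
  specialize (Hdel h ltac:(lra) Hh).
  apply Rabs_def2 in Hdel. destruct Hdel as [H1 H2].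
  assert (l/2 < (f (x+h) - f x)/h) by lra.
  assert (0 < (f (x+h) - f x)/h) by lra.
  assert (0 < f (x+h) - f x).
  { replace (f (x+h) - f x) with ((f (x+h) - f x)/h * h) by (field; lra).
    apply Rmult_lt_0_compat; lra. }
  lra.
Qed.

Lemma deriv_left f x l : derivable_pt_lim f x l -> l < 0 -> forall e, 0 < e ->
  exists h, 0 < h < e /\ f x < f (x - h).
Proof.
  intros Hd Hl e He.
  destruct (Hd (-l/2) ltac:(lra)) as [del Hdel].
  pose (h := Rmin e del / 2).
  assert (Hm1: Rmin e del <= e) by apply Rmin_l.
  assert (Hm2: Rmin e del <= del) by apply Rmin_r.
  assert (Hm0: 0 < Rmin e del) by (apply Rmin_glb_lt; [lra| apply cond_pos]).
  exists h. assert (0 < h) by (unfold h; lra). split. unfold h; lra.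
  assert (Hh: Rabs (-h) < del) by (rewrite Rabs_Ropp, Rabs_right; unfold h; lra).
  specialize (Hdel (-h) ltac:(lra) Hh).
  apply Rabs_def2 in Hdel. destruct Hdel as [H1 H2].
  assert ((f (x + -h) - f x)/(-h) < 0) by lra.
  assert (0 < f (x + - h) - f x).
  { replace (f (x + - h) - f x) with ((f (x + - h) - f x)/(-h) * (-h)) by (field; lra).
    nra. }
  replace (x - h) with (x + - h) by ring. lra.
Qed.

Definition KK (d : nat) : R := ((INR d - 1) / INR d) ^ d.

Lemma pow0_S d : (1 <= d)%nat -> 0 ^ d = 0.
Proof. intros. destruct d. lia. simpl. ring. Qed.

Lemma we_unique d t x y : (1 <= d)%nat ->
  IsWE (lat1 d) (lat2 d) t x -> IsWE (lat1 d) (lat2 d) t y -> x = y.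
Proof.
  intros Hd [[Hx1 [Hx2 Hx]] [Hx3 Hx4]] [[Hy1 [Hy2 Hy]] [Hy3 Hy4]].
  destruct x as [x1 x2]; destruct y as [y1 y2]; unfold lat1, lat2 in *; simpl in *.
  destruct d as [|d]; [lia|].
  assert (x1 = y1).
  { destruct (Rtotal_order x1 y1) as [Hl|[He|Hg]]; auto.
    - assert (y1 ^ S d <= x1 ^ S d) by (specialize (Hy3 ltac:(lra)); specialize (Hx4 ltac:(lra)); lra).
      pose proof (pow_lt_strict d x1 y1 ltac:(lra)). lra.
    - assert (x1 ^ S d <= y1 ^ S d) by (specialize (Hx3 ltac:(lra)); specialize (Hy4 ltac:(lra)); lra).
      pose proof (pow_lt_strict d y1 x1 ltac:(lra)). lra. }
  f_equal; lra.
Qed.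

Lemma we_interior d t v : 0 < v < 1 -> v ^ d + fst t = KK d + snd t ->
  IsWE (lat1 d) (lat2 d) t (v, 1 - v).
Proof.
  intros Hv He. unfold IsWE, Feasible, lat1, lat2; simpl. unfold KK in He.
  repeat split; intros; lra.
Qed.

Lemma we_exists d t : (1 <= d)%nat -> exists x, IsWE (lat1 d) (lat2 d) t x.
Proof.
  intros Hd. destruct t as [t1 t2].
  pose (s := KK d + t2 - t1).
  destruct (Rle_dec s 0) as [Hs0|Hs0].
  { exists (0,1). unfold IsWE, Feasible, lat1, lat2; simpl. rewrite pow0_S by auto.
    unfold s, KK in Hs0. repeat split; intros; lra. }
  destruct (Rle_dec 1 s) as [Hs1|Hs1].
  { exists (1,0). unfold IsWE, Feasible, lat1, lat2; simpl. rewrite pow1.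
    unfold s, KK in Hs1. repeat split; intros; lra. }
  pose (v := Rpower s (/ INR d)).
  assert (HD: 0 < INR d) by (apply lt_0_INR; lia).
  assert (Hvd: v ^ d = s).
  { unfold v. rewrite <- Rpower_pow by (unfold Rpower; apply exp_pos).
    rewrite Rpower_mult. replace (/ INR d * INR d) with 1 by (field; lra).
    apply Rpower_1; lra. }
  assert (Hv0: 0 < v) by (unfold v, Rpower; apply exp_pos).
  assert (Hv1: v < 1).
  { destruct (Rlt_dec v 1); auto. destruct d; [lia|].
    assert (1 ^ S d <= v ^ S d) by (apply pow_incr; lra). rewrite pow1 in H. lra. }
  exists (v, 1 - v). apply we_interior; simpl; [lra|]. unfold s in Hvd. lra.
Qed.

Lemma xflow_spec d t : (1 <= d)%nat -> IsWE (lat1 d) (lat2 d) t (xflow (lat1 d) (lat2 d) t).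
Proof.
  intros Hd. unfold xflow. apply epsilon_spec. apply we_exists; auto.
Qed.

Lemma xflow_eq d t x : (1 <= d)%nat -> IsWE (lat1 d) (lat2 d) t x -> xflow (lat1 d) (lat2 d) t = x.
Proof.
  intros Hd H. apply (we_unique d t); auto. apply xflow_spec; auto.
Qed.

Lemma KK_nonneg d : (1 <= d)%nat -> 0 <= KK d.
Proof.
  intros Hd. unfold KK. apply pow_le.
  assert (1 <= INR d) by (replace 1 with (INR 1) by reflexivity; apply le_INR; auto).
  apply Rmult_le_pos; [lra|]. left; apply Rinv_0_lt_compat; lra.
Qed.

Lemma pow_pred_mul d u : (1 <= d)%nat -> u ^ (pred d) * u = u ^ d.
Proof. intros. destruct d; [lia|]. simpl. ring. Qed.

Lemma der1 d K u : (1 <= d)%nat ->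
  derivable_pt_lim (fun v => (K - v^d) * v) u (K - u^d - INR d * u^d).
Proof.
  intros Hd. apply is_derive_Reals. auto_derive; auto.
  rewrite <- (pow_pred_mul d u Hd). ring.
Qed.

Lemma der2 d K u : (1 <= d)%nat ->
  derivable_pt_lim (fun v => (v^d - K) * (1 - v)) u (INR d * u^(pred d) * (1 - u) - (u^d - K)).
Proof.
  intros Hd. apply is_derive_Reals. auto_derive; auto. ring.
Qed.

Lemma xflow_dev1 d t2 v : (1 <= d)%nat -> 0 < v < 1 ->
  xflow (lat1 d) (lat2 d) (KK d + t2 - v ^ d, t2) = (v, 1 - v).
Proof. intros. apply xflow_eq; auto. apply we_interior; simpl; auto; lra. Qed.

Lemma xflow_dev2 d t1 v : (1 <= d)%nat -> 0 < v < 1 ->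
  xflow (lat1 d) (lat2 d) (t1, v ^ d + t1 - KK d) = (v, 1 - v).
Proof. intros. apply xflow_eq; auto. apply we_interior; simpl; auto; lra. Qed.

Section Loc.
Variables (d : nat) (c t1 t2 u : R).
Hypothesis Hd : (1 <= d)%nat.
Hypothesis HP1 : forall t1', 0 <= t1' <= c ->
  Profit1 (lat1 d) (lat2 d) (t1', t2) <= Profit1 (lat1 d) (lat2 d) (t1, t2).
Hypothesis HP2 : forall t2', 0 <= t2' <= c ->
  Profit2 (lat1 d) (lat2 d) (t1, t2') <= Profit2 (lat1 d) (lat2 d) (t1, t2).
Hypothesis Hflow : xflow (lat1 d) (lat2 d) (t1, t2) = (u, 1 - u).
Hypothesis Hu : 0 < u < 1.
Hypothesis HC : u ^ d + t1 = KK d + t2.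
Hypothesis Ht1 : 0 <= t1 <= c.
Hypothesis Ht2 : 0 <= t2 <= c.

Let HD : 0 < INR d.
Proof. apply lt_0_INR; lia. Qed.

Lemma L1 : t1 < c -> INR d * u ^ d <= t1.
Proof.
  intros Hc. destruct (Rle_dec (INR d * u ^ d) t1) as [h|h]; auto. exfalso.
  pose proof (der1 d (KK d + t2) u Hd) as Hder.
  destruct (deriv_left _ _ _ Hder ltac:(lra) (Rmin u ((c - t1)/INR d)))
    as [hh [[Hh0 Hh1] Hgt]].
  { apply Rmin_glb_lt; [lra|]. apply Rdiv_lt_0_compat; lra. }
  pose proof (Rmin_l u ((c - t1)/INR d)). pose proof (Rmin_r u ((c - t1)/INR d)).
  set (v := u - hh) in *.
  assert (Hv : 0 < v < 1) by (unfold v; lra).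
  assert (Hvu : v ^ d <= u ^ d) by (apply pow_incr; unfold v; lra).
  assert (Hdl : u ^ d - v ^ d <= INR d * (u - v)) by (apply pow_diff_le1; unfold v; lra).
  replace (u - v) with hh in Hdl by (unfold v; ring).
  assert (Hdl2 : INR d * hh < c - t1).
  { assert (hh < (c - t1) / INR d) by lra.
    apply (Rmult_lt_compat_l (INR d)) in H1; auto.
    replace (INR d * ((c - t1) / INR d)) with (c - t1) in H1 by (field; lra). lra. }
  specialize (HP1 (KK d + t2 - v ^ d)).
  unfold Profit1 in HP1. rewrite xflow_dev1, Hflow in HP1 by auto. simpl in HP1.
  assert (KK d + t2 - v ^ d <= c) by lra.
  specialize (HP1 ltac:(lra)).
  replace (KK d + t2 - u^d) with t1 in Hgt by lra. lra.
Qed.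

Lemma L2 : 0 < t1 -> t1 <= INR d * u ^ d.
Proof.
  intros Hc. destruct (Rle_dec t1 (INR d * u ^ d)) as [h|h]; auto. exfalso.
  pose proof (der1 d (KK d + t2) u Hd) as Hder.
  destruct (deriv_right _ _ _ Hder ltac:(lra) (Rmin (1 - u) (t1/INR d)))
    as [hh [[Hh0 Hh1] Hgt]].
  { apply Rmin_glb_lt; [lra|]. apply Rdiv_lt_0_compat; lra. }
  pose proof (Rmin_l (1 - u) (t1/INR d)). pose proof (Rmin_r (1 - u) (t1/INR d)).
  set (v := u + hh) in *.
  assert (Hv : 0 < v < 1) by (unfold v; lra).
  assert (Hvu : u ^ d <= v ^ d) by (apply pow_incr; unfold v; lra).
  assert (Hdl : v ^ d - u ^ d <= INR d * (v - u)) by (apply pow_diff_le1; unfold v; lra).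
  replace (v - u) with hh in Hdl by (unfold v; ring).
  assert (Hdl2 : INR d * hh < t1).
  { assert (hh < t1 / INR d) by lra.
    apply (Rmult_lt_compat_l (INR d)) in H1; auto.
    replace (INR d * (t1 / INR d)) with t1 in H1 by (field; lra). lra. }
  specialize (HP1 (KK d + t2 - v ^ d)).
  unfold Profit1 in HP1. rewrite xflow_dev1, Hflow in HP1 by auto. simpl in HP1.
  assert (0 <= KK d + t2 - v ^ d) by lra.
  specialize (HP1 ltac:(lra)).
  replace (KK d + t2 - u^d) with t1 in Hgt by lra. lra.
Qed.

Lemma L3 : t2 < c -> INR d * u ^ (pred d) * (1 - u) <= t2.
Proof.
  intros Hc. destruct (Rle_dec (INR d * u ^ (pred d) * (1 - u)) t2) as [h|h]; auto. exfalso.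
  pose proof (der2 d (KK d - t1) u Hd) as Hder.
  destruct (deriv_right _ _ _ Hder ltac:(lra) (Rmin (1 - u) ((c - t2)/INR d)))
    as [hh [[Hh0 Hh1] Hgt]].
  { apply Rmin_glb_lt; [lra|]. apply Rdiv_lt_0_compat; lra. }
  pose proof (Rmin_l (1 - u) ((c - t2)/INR d)). pose proof (Rmin_r (1 - u) ((c - t2)/INR d)).
  set (v := u + hh) in *.
  assert (Hv : 0 < v < 1) by (unfold v; lra).
  assert (Hvu : u ^ d <= v ^ d) by (apply pow_incr; unfold v; lra).
  assert (Hdl : v ^ d - u ^ d <= INR d * (v - u)) by (apply pow_diff_le1; unfold v; lra).
  replace (v - u) with hh in Hdl by (unfold v; ring).
  assert (Hdl2 : INR d * hh < c - t2).
  { assert (hh < (c - t2) / INR d) by lra.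
    apply (Rmult_lt_compat_l (INR d)) in H1; auto.
    replace (INR d * ((c - t2) / INR d)) with (c - t2) in H1 by (field; lra). lra. }
  specialize (HP2 (v ^ d + t1 - KK d)).
  unfold Profit2 in HP2. rewrite xflow_dev2, Hflow in HP2 by auto. simpl in HP2.
  assert (v ^ d + t1 - KK d <= c) by lra.
  specialize (HP2 ltac:(lra)).
  replace (u^d - (KK d - t1)) with t2 in Hgt by lra.
  replace (v^d - (KK d - t1)) with (v ^ d + t1 - KK d) in Hgt by lra. lra.
Qed.

Lemma L4 : 0 < t2 -> t2 <= INR d * u ^ (pred d) * (1 - u).
Proof.
  intros Hc. destruct (Rle_dec t2 (INR d * u ^ (pred d) * (1 - u))) as [h|h]; auto. exfalso.
  pose proof (der2 d (KK d - t1) u Hd) as Hder.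
  destruct (deriv_left _ _ _ Hder ltac:(lra) (Rmin u (t2/INR d)))
    as [hh [[Hh0 Hh1] Hgt]].
  { apply Rmin_glb_lt; [lra|]. apply Rdiv_lt_0_compat; lra. }
  pose proof (Rmin_l u (t2/INR d)). pose proof (Rmin_r u (t2/INR d)).
  set (v := u - hh) in *.
  assert (Hv : 0 < v < 1) by (unfold v; lra).
  assert (Hvu : v ^ d <= u ^ d) by (apply pow_incr; unfold v; lra).
  assert (Hdl : u ^ d - v ^ d <= INR d * (u - v)) by (apply pow_diff_le1; unfold v; lra).
  replace (u - v) with hh in Hdl by (unfold v; ring).
  assert (Hdl2 : INR d * hh < t2).
  { assert (hh < t2 / INR d) by lra.
    apply (Rmult_lt_compat_l (INR d)) in H1; auto.
    replace (INR d * (t2 / INR d)) with t2 in H1 by (field; lra). lra. }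
  specialize (HP2 (v ^ d + t1 - KK d)).
  unfold Profit2 in HP2. rewrite xflow_dev2, Hflow in HP2 by auto. simpl in HP2.
  assert (0 <= v ^ d + t1 - KK d) by lra.
  specialize (HP2 ltac:(lra)).
  replace (u^d - (KK d - t1)) with t2 in Hgt by lra.
  replace (v^d - (KK d - t1)) with (v ^ d + t1 - KK d) in Hgt by lra. lra.
Qed.

Lemma LD : KK d <= t1 -> t1 - KK d <= t2 * (1 - u).
Proof.
  intros Hk.
  specialize (HP2 (t1 - KK d)).
  assert (Hx : xflow (lat1 d) (lat2 d) (t1, t1 - KK d) = (0, 1)).
  { apply xflow_eq; auto. unfold IsWE, Feasible, lat1, lat2; simpl.
    rewrite pow0_S by auto. unfold KK. repeat split; intros; lra. }
  unfold Profit2 in HP2. rewrite Hx, Hflow in HP2. simpl in HP2.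
  pose proof (KK_nonneg d Hd).
  specialize (HP2 ltac:(lra)).
  lra.
Qed.

End Loc.

Lemma alg D a u p q K t1 t2 c :
  3 <= D -> a * D = D - 1 -> 0 < a < 1 -> K = a * q -> 0 < u < 1 -> 0 < p -> 0 < q ->
  (a <= u -> q <= p) -> (u < a -> p < q) -> (a < u -> q < p) ->
  u * p + t1 = K + t2 -> 0 < t1 <= c -> 0 < t2 <= c ->
  (t1 < c -> D * (u * p) <= t1) -> t1 <= D * (u * p) ->
  (t2 < c -> D * p * (1 - u) <= t2) -> t2 <= D * p * (1 - u) ->
  (K <= t1 -> t1 - K <= t2 * (1 - u)) ->
  t1 = c /\ t2 = c /\ c <= q.
Proof.
  intros HD Ha Ha1 HK Hu Hp Hq M1 M2 M3 HC Ht1 Ht2 L1 L2 L3 L4 LD.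
  assert (Key : a <= u -> a * q < p * ((2*D+1)*u - D)).
  { intros H. specialize (M1 H).
    assert (E1: (2*D+1)*a - D = a + D - 2) by lra.
    assert (E2: (2*D+1)*a - D <= (2*D+1)*u - D) by nra.
    assert (0 < (2*D+1)*u - D) by lra.
    assert (q * ((2*D+1)*u - D) <= p * ((2*D+1)*u - D)) by (apply Rmult_le_compat_r; lra).
    assert (q * a < q * ((2*D+1)*u - D)) by (apply Rmult_lt_compat_l; lra).
    lra. }
  destruct (Rlt_dec t1 c) as [c1|c1]; destruct (Rlt_dec t2 c) as [c2|c2].
  - exfalso. specialize (L1 c1). specialize (L3 c2).
    assert (Hua : a <= u).
    { destruct (Rlt_dec u a) as [hu|hu]; [|lra]. exfalso.
      assert (HKt : K <= t1).
      { assert ((D+1)*u < D) by nra. nra. }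
      specialize (LD HKt).
      assert (p * (D - (D+1)*u) <= p * (D * (1-u)*(1-u))) by nra.
      assert (D - (D+1)*u <= D * (1-u)*(1-u)).
      { apply (Rmult_le_reg_l p); lra. }
      nra. }
    specialize (Key Hua). nra.
  - exfalso. assert (t2 = c) by lra. specialize (L1 c1).
    assert (Hua : a < u).
    { destruct (Rlt_dec a u) as [hu|hu]; [lra|]. exfalso.
      assert (u * p <= a * q).
      { assert (p <= q) by (destruct (Req_dec u a); [subst; lra| apply Rlt_le; apply M2; lra]).
        apply Rmult_le_compat; lra. }
      nra. }
    specialize (Key (Rlt_le _ _ Hua)). nra.
  - exfalso. assert (t1 = c) by lra. specialize (L3 c2).
    assert (Hua : u < a).
    { destruct (Rlt_dec u a) as [hu|hu]; [lra|]. exfalso.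
      specialize (M1 ltac:(lra)).
      assert (a * q <= u * p) by (apply Rmult_le_compat; lra).
      nra. }
    assert (HKt : K <= t1).
    { assert ((D+1)*u < D) by nra. nra. }
    specialize (LD HKt).
    assert (D * p * (1-u) * u <= p * u) by nra.
    assert (D * (1-u) <= 1).
    { apply (Rmult_le_reg_l (p*u)). nra. nra. }
    nra.
  - assert (t1 = c) by lra. assert (t2 = c) by lra.
    assert (Hua : u = a).
    { destruct (Rtotal_order u a) as [h|[h|h]]; auto; exfalso.
      - specialize (M2 h). assert (u * p < a * q).
        { apply Rle_lt_trans with (a * p). apply Rmult_le_compat_r; lra.
          apply Rmult_lt_compat_l; lra. }
        lra.
      - specialize (M3 h). assert (a * q < u * p).
        { apply Rle_lt_trans with (a * p). apply Rmult_le_compat_l; lra.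
          apply Rmult_lt_compat_r; lra. }
        lra. }
    subst u. assert (p = q).
    { apply (Rmult_eq_reg_l a); lra. }
    subst p. repeat split; try lra.
    assert (D * q * (1 - a) = q) by nra. lra.
Qed.

Lemma alg1 D a q K c v vd t1 :
  3 <= D -> a * D = D - 1 -> 0 < a < 1 -> 0 < q -> K = a * q -> 0 <= c <= q ->
  a <= v -> 0 <= t1 -> (D + 1) * K * (v - a) <= v * vd - a * K ->
  t1 <= K + c - vd -> t1 * v <= c * a.
Proof.
  intros HD Ha Ha1 Hq HK Hc Hv Ht1 Hb Ht.
  assert (E1 : t1 * v <= (K + c - vd) * v) by (apply Rmult_le_compat_r; lra).
  assert (E2 : D * K = (D - 1) * q) by (rewrite HK; nra).
  assert (E3 : (c - D * K) * (v - a) <= 0).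
  { assert (c - D * K <= 0) by nra. assert (0 <= v - a) by lra. nra. }
  nra.
Qed.

Lemma alg2 D a q K c w r t2 :
  3 <= D -> a * D = D - 1 -> 0 < a < 1 -> K = a * q -> 0 <= c <= q ->
  0 <= w < a -> 0 <= r -> (D - 1) * r * (a - w) <= q - w * r ->
  0 <= t2 -> t2 <= w * (w * r) + c - K -> t2 * (1 - w) <= c * (1 - a).
Proof.
  intros HD Ha Ha1 HK Hc Hw Hr Hb Ht2 Ht2'.
  assert (E1 : t2 * (1 - w) <= (w * (w * r) + c - K) * (1 - w)) by (apply Rmult_le_compat_r; lra).
  assert (E2 : (c - K) * (a - w) <= (q - K) * (a - w)) by (apply Rmult_le_compat_r; lra).
  assert (E3 : (1 - a) * (D - 1) = a).
  { assert (a = (D-1)/D) by (apply (Rmult_eq_reg_r D); [unfold Rdiv; rewrite Rmult_assoc, Rinv_l; lra | lra]).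
    subst a. field. lra. }
  assert (E4 : (1 - a) * ((D - 1) * r * (a - w)) <= (1 - a) * (q - w * r)) by (apply Rmult_le_compat_l; lra).
  assert (E5 : 0 <= r * (a - w) * (a - w)) by (apply Rmult_le_pos; [apply Rmult_le_pos|]; lra).
  assert (E6 : w * (w * r * (1 - w) - q * (1 - a)) <= 0).
  { assert (w * r * (1 - w) - q * (1 - a) <= 0) by nra.
    assert (0 <= w * (q * (1 - a) - w * r * (1 - w))) by (apply Rmult_le_pos; lra).
    lra. }
  nra.
Qed.

Lemma a_facts n : (1 <= n)%nat ->
  let D := INR (S (S n)) in let a := (D - 1) / D in
  3 <= D /\ a * D = D - 1 /\ 0 < a < 1.
Proof.
  intros Hn D a. assert (HD: D = INR n + 2) by (unfold D; rewrite !S_INR; ring).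
  assert (1 <= INR n) by (replace 1 with (INR 1) by reflexivity; apply le_INR; auto).
  assert (a * D = D - 1) by (unfold a; field; lra).
  split; [lra|split; auto].
  unfold a. split. apply Rdiv_lt_0_compat; lra.
  apply (Rmult_lt_reg_r D); [lra|]. unfold Rdiv. rewrite Rmult_assoc, Rinv_l by lra. lra.
Qed.

Lemma pos_of_ne x : 0 <= x -> x <> 0 -> 0 < x.
Proof. intros [h|h] e; auto. congruence. Qed.

Lemma InT_char n c t : (1 <= n)%nat -> 0 <= c ->
  InT (lat1 (S (S n))) (lat2 (S (S n))) c t ->
  t = (c, c) /\ c <= ((INR (S (S n)) - 1) / INR (S (S n))) ^ (S n).
Proof.
  intros Hn Hc [[H1a H1b] [[H2a H2b] [HP1 HP2]]].
  destruct t as [t1 t2]; cbn [fst snd] in *.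
  destruct (a_facts n Hn) as [HD [Ha Ha1]].
  set (d := S (S n)) in *. set (D := INR d) in *. set (a := (D - 1) / D) in *.
  assert (Hd1 : (1 <= d)%nat) by (unfold d; lia).
  assert (Hq : 0 < a ^ (S n)) by (apply pow_lt; lra).
  assert (HK : KK d = a * a ^ (S n)) by reflexivity.
  assert (HKp : 0 < KK d) by (rewrite HK; apply Rmult_lt_0_compat; lra).
  destruct (Req_dec c 0) as [Hc0|Hc0].
  { subst c. split; [f_equal; lra| lra]. }
  destruct (xflow (lat1 d) (lat2 d) (t1, t2)) as [u x2] eqn:Hx.
  pose proof (xflow_spec d (t1, t2) Hd1) as Hwe; rewrite Hx in Hwe.
  destruct Hwe as [[Hu0 [Hx20 Hsum]] [Hw1 Hw2]]; cbn [fst snd] in *. unfold lat1, lat2 in Hw1, Hw2.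
  change (((INR d - 1) / INR d) ^ d) with (KK d) in *.
  assert (Hupos : 0 < u).
  { destruct (Req_dec u 0) as [h|h]; [|apply pos_of_ne; auto]. exfalso. subst u.
    set (t1' := Rmin c (KK d / 2)).
    assert (0 < t1') by (apply Rmin_glb_lt; lra).
    assert (t1' <= c) by apply Rmin_l. assert (t1' <= KK d / 2) by apply Rmin_r.
    specialize (HP1 t1' ltac:(lra)). unfold Profit1 in HP1. rewrite Hx in HP1; cbn [fst snd] in HP1.
    destruct (xflow (lat1 d) (lat2 d) (t1', t2)) as [y1 y2] eqn:Hy.
    pose proof (xflow_spec d (t1', t2) Hd1) as Hwy; rewrite Hy in Hwy.
    destruct Hwy as [[Hy0 [Hy20 Hysum]] [Hy1 Hy2]]; cbn [fst snd] in *. unfold lat1, lat2 in Hy1, Hy2.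
    change (((INR d - 1) / INR d) ^ d) with (KK d) in *.
    destruct (Req_dec y1 0) as [e|e].
    - subst y1. rewrite pow0_S in Hy2 by auto. specialize (Hy2 ltac:(lra)). lra.
    - assert (0 < t1' * y1) by (apply Rmult_lt_0_compat; [lra| apply pos_of_ne; [lra|auto]]). lra. }
  assert (Hx2pos : 0 < x2).
  { destruct (Req_dec x2 0) as [h|h]; [|apply pos_of_ne; auto]. exfalso. subst x2.
    assert (Hu1 : u = 1) by lra. subst u.
    set (t2' := Rmin c ((1 - KK d) / 2)).
    assert (HK1 : KK d < 1).
    { rewrite HK. assert (a ^ S n <= 1) by (rewrite <- (pow1 (S n)); apply pow_incr; lra).
      assert (a * a ^ S n <= a * 1) by (apply Rmult_le_compat_l; lra). lra. }
    assert (0 < t2') by (apply Rmin_glb_lt; lra).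
    assert (t2' <= c) by apply Rmin_l. assert (t2' <= (1 - KK d) / 2) by apply Rmin_r.
    specialize (HP2 t2' ltac:(lra)). unfold Profit2 in HP2. rewrite Hx in HP2; cbn [fst snd] in HP2.
    destruct (xflow (lat1 d) (lat2 d) (t1, t2')) as [y1 y2] eqn:Hy.
    pose proof (xflow_spec d (t1, t2') Hd1) as Hwy; rewrite Hy in Hwy.
    destruct Hwy as [[Hy0 [Hy20 Hysum]] [Hy1 Hy2]]; cbn [fst snd] in *. unfold lat1, lat2 in Hy1, Hy2.
    change (((INR d - 1) / INR d) ^ d) with (KK d) in *.
    destruct (Req_dec y2 0) as [e|e].
    - subst y2. assert (y1 = 1) by lra. subst y1. rewrite pow1 in Hy1.
      specialize (Hy1 ltac:(lra)). lra.
    - assert (0 < t2' * y2) by (apply Rmult_lt_0_compat; [lra| apply pos_of_ne; [lra|auto]]). lra. }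
  assert (Hx2 : x2 = 1 - u) by lra. subst x2.
  assert (HC : u ^ d + t1 = KK d + t2).
  { specialize (Hw1 Hupos). specialize (Hw2 Hx2pos). lra. }
  assert (Hu : 0 < u < 1) by lra.
  pose proof (L1 d c t1 t2 u Hd1 HP1 Hx Hu HC (conj H1a H1b)) as L1.
  pose proof (L2 d c t1 t2 u Hd1 HP1 Hx Hu HC (conj H1a H1b)) as L2.
  pose proof (L3 d c t1 t2 u Hd1 HP2 Hx Hu HC (conj H1a H1b) (conj H2a H2b)) as L3.
  pose proof (L4 d c t1 t2 u Hd1 HP2 Hx Hu HC (conj H1a H1b) (conj H2a H2b)) as L4.
  pose proof (LD d c t1 t2 u Hd1 HP2 Hx (conj H1a H1b)) as LD.
  change (pred d) with (S n) in L3, L4. fold D in L1, L2, L3, L4.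
  change (u ^ d) with (u * u ^ (S n)) in *.
  assert (Hp : 0 < u ^ S n) by (apply pow_lt; lra).
  assert (M1 : a <= u -> a ^ S n <= u ^ S n) by (intros; apply pow_incr; lra).
  assert (M2 : u < a -> u ^ S n < a ^ S n) by (intros; apply pow_lt_strict; lra).
  assert (M3 : a < u -> a ^ S n < u ^ S n) by (intros; apply pow_lt_strict; lra).
  assert (Ht1p : 0 < t1).
  { destruct (Req_dec t1 0); [|apply pos_of_ne; auto]. exfalso. specialize (L1 ltac:(lra)).
    assert (0 < D * (u * u ^ S n)) by (apply Rmult_lt_0_compat; [lra| apply Rmult_lt_0_compat; lra]).
    lra. }
  assert (Ht2p : 0 < t2).
  { destruct (Req_dec t2 0); [|apply pos_of_ne; auto]. exfalso. specialize (L3 ltac:(lra)).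
    assert (0 < D * u ^ S n * (1 - u)) by (apply Rmult_lt_0_compat; [apply Rmult_lt_0_compat|]; lra).
    lra. }
  destruct (alg D a u (u ^ S n) (a ^ S n) (KK d) t1 t2 c HD Ha Ha1 HK Hu Hp Hq M1 M2 M3 HC
     (conj Ht1p H1b) (conj Ht2p H2b) L1 (L2 Ht1p) L3 (L4 Ht2p) LD) as [e1 [e2 e3]].
  subst; split; auto.
Qed.

Lemma xflow_cc n c : (1 <= n)%nat ->
  xflow (lat1 (S (S n))) (lat2 (S (S n))) (c, c) =
  ((INR (S (S n)) - 1) / INR (S (S n)), 1 - (INR (S (S n)) - 1) / INR (S (S n))).
Proof.
  intros Hn. destruct (a_facts n Hn) as [HD [Ha Ha1]].
  apply xflow_eq; [lia|]. apply we_interior; cbn [fst snd]; [lra|]. unfold KK. ring.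
Qed.

Lemma InT_cc n c : (1 <= n)%nat -> 0 <= c ->
  c <= ((INR (S (S n)) - 1) / INR (S (S n))) ^ (S n) ->
  InT (lat1 (S (S n))) (lat2 (S (S n))) c (c, c).
Proof.
  intros Hn Hc Hcq.
  pose proof (xflow_cc n c Hn) as Hxc.
  destruct (a_facts n Hn) as [HD [Ha Ha1]].
  set (d := S (S n)) in *. set (D := INR d) in *. set (a := (D - 1) / D) in *.
  assert (Hd1 : (1 <= d)%nat) by (unfold d; lia).
  assert (Hq : 0 < a ^ (S n)) by (apply pow_lt; lra).
  assert (HK : KK d = a * a ^ (S n)) by reflexivity.
  unfold InT; cbn [fst snd]. split; [lra|]. split; [lra|]. split.
  - intros t1' Ht1'. unfold Profit1. rewrite Hxc. cbn [fst snd].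
    destruct (xflow (lat1 d) (lat2 d) (t1', c)) as [y1 y2] eqn:Hy.
    pose proof (xflow_spec d (t1', c) Hd1) as Hwy; rewrite Hy in Hwy.
    destruct Hwy as [[Hy0 [Hy20 Hysum]] [Hy1 Hy2]]; cbn [fst snd] in *.
    unfold lat1, lat2 in Hy1, Hy2.
    change (((INR d - 1) / INR d) ^ d) with (KK d) in *.
    destruct (Req_dec y1 0) as [e|e].
    { subst y1. rewrite Rmult_0_r. apply Rmult_le_pos; lra. }
    assert (Hy1p : 0 < y1) by (apply pos_of_ne; auto).
    specialize (Hy1 Hy1p).
    destruct (Rlt_dec y1 a) as [hl|hl].
    + assert (t1' * y1 <= c * y1) by (apply Rmult_le_compat_r; lra).
      assert (c * y1 <= c * a) by (apply Rmult_le_compat_l; lra). lra.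
    + pose proof (pow_diff_lb d a y1 ltac:(lra)) as Hb.
      rewrite S_INR in Hb. fold D in Hb.
      change (a ^ d) with (KK d) in Hb.
      change (y1 ^ S d) with (y1 * y1 ^ d) in Hb.
      change (a ^ S d) with (a * KK d) in Hb.
      apply (alg1 D a (a ^ S n) (KK d) c y1 (y1 ^ d) t1'); auto; lra.
  - intros t2' Ht2'. unfold Profit2. rewrite Hxc. cbn [fst snd].
    destruct (xflow (lat1 d) (lat2 d) (c, t2')) as [y1 y2] eqn:Hy.
    pose proof (xflow_spec d (c, t2') Hd1) as Hwy; rewrite Hy in Hwy.
    destruct Hwy as [[Hy0 [Hy20 Hysum]] [Hy1 Hy2]]; cbn [fst snd] in *.
    unfold lat1, lat2 in Hy1, Hy2.
    change (((INR d - 1) / INR d) ^ d) with (KK d) in *.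
    destruct (Req_dec y2 0) as [e|e].
    { subst y2. rewrite Rmult_0_r. apply Rmult_le_pos; lra. }
    assert (Hy2p : 0 < y2) by (apply pos_of_ne; auto).
    specialize (Hy2 Hy2p).
    assert (y2 = 1 - y1) by lra. subst y2.
    destruct (Rle_dec a y1) as [hl|hl].
    + assert (t2' * (1 - y1) <= c * (1 - y1)) by (apply Rmult_le_compat_r; lra).
      assert (c * (1 - y1) <= c * (1 - a)) by (apply Rmult_le_compat_l; lra). lra.
    + pose proof (pow_diff_lb n y1 a ltac:(lra)) as Hb.
      replace (INR (S n)) with (D - 1) in Hb by (unfold D, d; rewrite (S_INR (S n)); ring).
      change (y1 ^ S n) with (y1 * y1 ^ n) in Hb.
      change (y1 ^ d) with (y1 * (y1 * y1 ^ n)) in Hy2.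
      apply (alg2 D a (a ^ S n) (KK d) c y1 (y1 ^ n) t2'); auto; try lra.
      apply pow_le; lra.
Qed.

Lemma r_facts n : (1 <= n)%nat ->
  let D := INR (S (S n)) in let r := Rpower (D + 1) (/ D) in
  0 < r /\ r ^ (S (S n)) = D + 1 /\ 1 <= r.
Proof.
  intros Hn D r. destruct (a_facts n Hn) as [HD _]. fold D in HD.
  assert (Hr : 0 < r) by (unfold r, Rpower; apply exp_pos).
  assert (Hrd : r ^ (S (S n)) = D + 1).
  { unfold r. rewrite <- Rpower_pow by (unfold Rpower; apply exp_pos).
    rewrite Rpower_mult. fold D. replace (/ D * D) with 1 by (field; lra).
    apply Rpower_1; lra. }
  repeat split; auto.
  destruct (Rle_dec 1 r) as [h|h]; auto. exfalso.
  assert (r ^ (S (S n)) < 1 ^ (S (S n))) by (apply pow_lt_strict; lra).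
  rewrite pow1 in H. lra.
Qed.

Definition Cst (d : nat) (y : R) : R := y ^ d * y + KK d * (1 - y).

Lemma Cost_eq d x : Feasible x -> Cost (lat1 d) (lat2 d) x = Cst d (fst x).
Proof.
  intros [h1 [h2 h3]]. destruct x as [x1 x2]. unfold Cost, Cst, lat1, lat2, KK; cbn [fst snd] in *.
  replace x2 with (1 - x1) by lra. ring.
Qed.

Lemma opt_facts n : (1 <= n)%nat ->
  let D := INR (S (S n)) in let d := S (S n) in
  let xs := (D - 1) / (D * Rpower (D + 1) (/ D)) in
  0 < xs < 1 /\ xs ^ d = KK d / (D + 1) /\
  (forall y, 0 <= y -> Cst d xs <= Cst d y) /\ (forall y, 0 <= y -> Cst d y <= Cst d xs -> y = xs).
Proof.
  intros Hn D d xs.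
  destruct (a_facts n Hn) as [HD [Ha Ha1]]. fold D in HD, Ha, Ha1.
  destruct (r_facts n Hn) as [Hr [Hrd Hr1]]. fold D in Hr, Hrd, Hr1.
  set (r := Rpower (D + 1) (/ D)) in *. set (a := (D - 1) / D) in *.
  assert (Hxs : xs = a / r) by (unfold xs, a; field; lra).
  assert (Hxs1 : 0 < xs < 1).
  { rewrite Hxs. split. apply Rdiv_lt_0_compat; lra.
    apply (Rmult_lt_reg_r r); [lra|]. unfold Rdiv. rewrite Rmult_assoc, Rinv_l; lra. }
  assert (HK : KK d = a ^ d) by reflexivity.
  assert (Hxd : xs ^ d = KK d / (D + 1)).
  { rewrite Hxs, HK. unfold Rdiv. rewrite Rpow_mult_distr, pow_inv. unfold d in *. rewrite Hrd. reflexivity. }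
  assert (HD1 : INR (S d) = D + 1) by (rewrite S_INR; reflexivity).
  assert (HKx : KK d = (D + 1) * xs ^ d) by (rewrite Hxd; field; lra).
  split; auto. split; auto. split.
  - intros y Hy. unfold Cst.
    destruct (Rle_dec xs y) as [h|h].
    + pose proof (pow_diff_lb d xs y ltac:(lra)) as Hb. rewrite HD1 in Hb.
      change (y ^ S d) with (y * y ^ d) in Hb. change (xs ^ S d) with (xs * xs ^ d) in Hb. change (xs ^ S (S n)) with (xs ^ d) in Hb.
      rewrite HKx. nra.
    + pose proof (pow_diff_ub d y xs ltac:(lra)) as Hb. rewrite HD1 in Hb.
      change (y ^ S d) with (y * y ^ d) in Hb. change (xs ^ S d) with (xs * xs ^ d) in Hb. change (xs ^ S (S n)) with (xs ^ d) in Hb.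
      rewrite HKx. nra.
  - intros y Hy Hle. unfold Cst in Hle.
    destruct (Rtotal_order y xs) as [h|[h|h]]; auto; exfalso.
    + pose proof (pow_diff_ub_strict (S n) y xs ltac:(lra)) as Hb.
      change (S (S (S n))) with (S d) in Hb. rewrite HD1 in Hb.
      change (y ^ S d) with (y * y ^ d) in Hb. change (xs ^ S d) with (xs * xs ^ d) in Hb. change (xs ^ S (S n)) with (xs ^ d) in Hb.
      rewrite HKx in Hle. nra.
    + pose proof (pow_diff_lb_strict (S n) xs y ltac:(lra)) as Hb.
      change (S (S (S n))) with (S d) in Hb. rewrite HD1 in Hb.
      change (y ^ S d) with (y * y ^ d) in Hb. change (xs ^ S d) with (xs * xs ^ d) in Hb. change (xs ^ S (S n)) with (xs ^ d) in Hb.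
      rewrite HKx in Hle. nra.
Qed.

Lemma nat_above r : exists N : nat, r < INR N.
Proof.
  destruct (archimed r) as [H _]. exists (Z.to_nat (up r)).
  destruct (Z_le_gt_dec 0 (up r)) as [h|h].
  - rewrite INR_IZR_INZ, Z2Nat.id; auto.
  - assert (IZR (up r) < 0) by (apply IZR_lt; lia). pose proof (pos_INR (Z.to_nat (up r))). lra.
Qed.

Lemma binom2 k y : 0 <= y -> 1 + INR k * y + INR k * (INR k - 1) / 2 * (y * y) <= (1 + y) ^ k.
Proof.
  intros Hy. induction k as [|k IH].
  - simpl. lra.
  - rewrite S_INR. simpl pow.
    assert (0 <= INR k) by apply pos_INR.
    assert ((1 + y) * (1 + INR k * y + INR k * (INR k - 1) / 2 * (y * y)) <= (1 + y) * (1 + y) ^ k)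
      by (apply Rmult_le_compat_l; lra).
    assert (0 <= INR k * (INR k - 1) / 2 * (y * y) * y \/ INR k * (INR k - 1) / 2 * (y * y) * y < 0) by lra.
    destruct k. simpl in *. nra.
    assert (1 <= INR (S k)) by (rewrite S_INR; pose proof (pos_INR k); lra).
    assert (0 <= INR (S k) * (INR (S k) - 1) / 2 * (y * y) * y).
    { apply Rmult_le_pos; [|lra]. apply Rmult_le_pos; [|nra]. unfold Rdiv.
      apply Rmult_le_pos; [|lra]. apply Rmult_le_pos; lra. }
    nra.
Qed.

Lemma cv_part : cv_infty (fun d : nat =>
    Rpower (INR d + 1) ((INR d + 1) / INR d) /
    (Rpower (INR d + 1) ((INR d + 1) / INR d) - (INR d - 1))).
Proof.
  intros M. destruct (nat_above (144 * (M * M) + 2)) as [N0 HN0].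
  exists N0. intros d Hd.
  assert (HN : 144 * (M * M) + 2 < INR d) by (apply Rlt_le_trans with (INR N0); auto; apply le_INR; auto).
  set (N := INR d) in *.
  assert (HN2 : 2 < N) by nra.
  assert (Hd1 : (1 <= d)%nat) by (destruct d; [simpl in HN2; unfold N in HN2; simpl in HN2; lra| lia]).
  set (r := Rpower (N + 1) (/ N)).
  assert (Hr : 0 < r) by (unfold r, Rpower; apply exp_pos).
  assert (Hrd : r ^ d = N + 1).
  { unfold r. rewrite <- Rpower_pow by (unfold Rpower; apply exp_pos).
    rewrite Rpower_mult. fold N. replace (/ N * N) with 1 by (field; lra).
    apply Rpower_1; lra. }
  assert (Hr1 : 1 <= r).
  { destruct (Rle_dec 1 r) as [h|h]; auto. exfalso. destruct d; [lia|].
    assert (r ^ (S d) < 1 ^ (S d)) by (apply pow_lt_strict; lra).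
    rewrite pow1 in H. fold N in Hrd. lra. }
  assert (HP : Rpower (N + 1) ((N + 1) / N) = (N + 1) * r).
  { replace ((N + 1) / N) with (1 + / N) by (field; lra).
    rewrite Rpower_plus, Rpower_1 by lra. reflexivity. }
  rewrite HP.
  set (s := sqrt N).
  assert (Hs : s * s = N) by (apply sqrt_sqrt; lra).
  assert (Hs1 : 1 < s).
  { destruct (Rlt_dec 1 s) as [h|h]; auto. assert (0 <= s) by apply sqrt_pos. nra. }
  set (y := 2 / s).
  assert (Hy : 0 <= y) by (unfold y; apply Rlt_le, Rdiv_lt_0_compat; lra).
  assert (Hry : r <= 1 + y).
  { destruct (Rle_dec r (1 + y)) as [h|h]; auto. exfalso.
    pose proof (binom2 d y Hy) as Hb. fold N in Hb.
    assert (Hyy : y * y = 4 / N) by (unfold y; rewrite <- Hs; field; lra).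
    rewrite Hyy in Hb.
    assert (N * (N - 1) / 2 * (4 / N) = 2 * (N - 1)) by (field; lra).
    destruct d; [lia|].
    assert ((1 + y) ^ (S d) < r ^ (S d)) by (apply pow_lt_strict; lra).
    assert (0 <= N * y) by (apply Rmult_le_pos; lra).
    fold N in Hrd. lra. }
  set (Q := (N + 1) * r - (N - 1)).
  assert (HQ0 : 2 <= Q) by (unfold Q; nra).
  assert (HQ : Q <= 6 * s).
  { assert ((N + 1) * r <= (N + 1) * (1 + y)) by (apply Rmult_le_compat_l; lra).
    assert ((N + 1) * y <= 4 * s).
    { unfold y. apply (Rmult_le_reg_r s); [lra|]. unfold Rdiv.
      replace ((N + 1) * (2 * / s) * s) with (2 * (N + 1)) by (field; lra). nra. }
    unfold Q. nra. }
  assert (HM : M < s / 12).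
  { destruct (Rlt_dec M 0) as [h|h]. assert (0 < s / 12) by lra. lra.
    assert (144 * (M * M) < s * s) by lra.
    assert (12 * M < s) by nra. lra. }
  assert (HV : s / 12 <= ((N + 1) * r) / Q).
  { apply (Rmult_le_reg_r Q); [lra|]. unfold Rdiv at 2. rewrite Rmult_assoc, Rinv_l, Rmult_1_r by lra.
    assert (s / 12 * Q <= s / 12 * (6 * s)) by (apply Rmult_le_compat_l; lra).
    assert (N + 1 <= (N + 1) * r) by nra.
    nra. }
  fold Q. lra.
Qed.

Lemma ratio_eq n : (1 <= n)%nat ->
  let D := INR (S (S n)) in let d := S (S n) in
  let xs := (D - 1) / (D * Rpower (D + 1) (/ D)) in
  Cst d ((D - 1) / D) / Cst d xs =
  Rpower (D + 1) ((D + 1) / D) / (Rpower (D + 1) ((D + 1) / D) - (D - 1)).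
Proof.
  intros Hn D d xs.
  destruct (a_facts n Hn) as [HD [Ha Ha1]]. fold D in HD, Ha, Ha1.
  destruct (r_facts n Hn) as [Hr [Hrd Hr1]]. fold D in Hr, Hrd, Hr1.
  destruct (opt_facts n Hn) as [Hxs [Hxd _]]. fold D d xs in Hxs, Hxd.
  set (r := Rpower (D + 1) (/ D)) in *. set (a := (D - 1) / D) in *.
  assert (HP : Rpower (D + 1) ((D + 1) / D) = (D + 1) * r).
  { replace ((D + 1) / D) with (1 + / D) by (field; lra).
    rewrite Rpower_plus, Rpower_1 by lra. reflexivity. }
  rewrite HP.
  assert (HK : KK d = a ^ d) by reflexivity.
  assert (HKp : 0 < KK d) by (rewrite HK; apply pow_lt; lra).
  unfold Cst. rewrite Hxd. rewrite <- HK.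
  assert (Hxs' : xs = (D - 1) / (D * r)) by reflexivity.
  rewrite Hxs'.
  assert (0 < (D + 1) * r - (D - 1)) by nra.
  field. split; [lra|]. split; [lra|]. split; [lra|].
  split; [lra|].
  assert (0 < D * r - (D - 1)) by nra.
  assert (0 < KK d * (D * r - (D - 1)) * (D + 1)) by (apply Rmult_lt_0_compat; [apply Rmult_lt_0_compat|]; lra).
  assert (0 < KK d * (D - 1)) by (apply Rmult_lt_0_compat; lra).
  lra.
Qed.

Theorem mainTheorem16 :
  (forall d : nat, (3 <= d)%nat ->
    let a := (INR d - 1) / INR d in
    let xstar1 := (INR d - 1) / (INR d * Rpower (INR d + 1) (/ INR d)) in
    let xstar : flow := (xstar1, 1 - xstar1) in
    let V := Rpower (INR d + 1) ((INR d + 1) / INR d) /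
             (Rpower (INR d + 1) ((INR d + 1) / INR d) - (INR d - 1)) in
    (forall c, 0 <= c ->
       ((exists t, InT (lat1 d) (lat2 d) c t) <-> c <= a ^ (d - 1))) /\
    (forall c, 0 <= c -> c <= a ^ (d - 1) ->
       (forall t, InT (lat1 d) (lat2 d) c t <-> t = (c, c)) /\
       xflow (lat1 d) (lat2 d) (c, c) = (a, 1 / INR d) /\
       xflow (lat1 d) (lat2 d) (0, 0) = (a, 1 / INR d)) /\
    IsOpt (lat1 d) (lat2 d) xstar /\
    (forall x, IsOpt (lat1 d) (lat2 d) x -> x = xstar) /\
    IsInfSup (InT (lat1 d) (lat2 d))
      (fun t => Cost (lat1 d) (lat2 d) (xflow (lat1 d) (lat2 d) t)
                / Cost (lat1 d) (lat2 d) xstar) V) /\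
  cv_infty (fun d : nat =>
    Rpower (INR d + 1) ((INR d + 1) / INR d) /
    (Rpower (INR d + 1) ((INR d + 1) / INR d) - (INR d - 1))).
Proof.
  split; [|exact cv_part].
  intros d Hd a xstar1 xstar V.
  destruct d as [|[|n]]; [lia|lia|].
  assert (Hn : (1 <= n)%nat) by lia.
  replace (S (S n) - 1)%nat with (S n) by lia.
  destruct (a_facts n Hn) as [HD [Ha Ha1]]. cbv zeta in HD, Ha, Ha1. fold a in Ha, Ha1.
  assert (Hq0 : 0 <= a ^ S n) by (apply pow_le; lra).
  destruct (opt_facts n Hn) as [Hxs [Hxd [Hopt Huniq]]].
  pose proof (ratio_eq n Hn) as Hrat.
  assert (Ha1D : 1 - a = 1 / INR (S (S n))) by (unfold a; field; lra).
  assert (Hxfc : forall c, xflow (lat1 (S (S n))) (lat2 (S (S n))) (c, c) = (a, 1 / INR (S (S n)))).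
  { intros c. rewrite xflow_cc by auto. rewrite <- Ha1D. reflexivity. }
  assert (Hfeas : Feasible xstar) by (unfold xstar, Feasible, xstar1; cbn [fst snd]; lra).
  assert (HsubT : forall c, 0 <= c -> c <= a ^ S n ->
            forall t, InT (lat1 (S (S n))) (lat2 (S (S n))) c t <-> t = (c, c)).
  { intros c Hc Hcq t. split.
    - intros H. apply (InT_char n c t Hn Hc H).
    - intros ->. apply InT_cc; auto. }
  assert (Hval : forall c, Cost (lat1 (S (S n))) (lat2 (S (S n))) (xflow (lat1 (S (S n))) (lat2 (S (S n))) (c, c))
                 / Cost (lat1 (S (S n))) (lat2 (S (S n))) xstar = V).
  { intros c. rewrite Hxfc. rewrite <- Ha1D.
    rewrite !Cost_eq by (auto; unfold Feasible; cbn [fst snd]; lra).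
    cbn [fst]. unfold V, a. unfold xstar, xstar1. cbn [fst]. apply Hrat. }
  split; [|split; [|split; [|split]]].
  - intros c Hc. split.
    + intros [t Ht]. apply (InT_char n c t Hn Hc Ht).
    + intros Hcq. exists (c, c). apply InT_cc; auto.
  - intros c Hc Hcq. split; [apply HsubT; auto|]. split; apply Hxfc.
  - split; auto. intros y Hy. rewrite !Cost_eq by auto.
    apply Hopt. destruct Hy; lra.
  - intros x [Hx Hxo]. specialize (Hxo xstar Hfeas).
    rewrite !Cost_eq in Hxo by auto.
    destruct x as [x1 x2]. destruct Hx as [h1 [h2 h3]]. cbn [fst snd] in *.
    assert (x1 = xstar1) by (apply Huniq; auto).
    unfold xstar. f_equal; lra.
  - split.
    + intros c Hc W [[t Ht] Hle].
      destruct (InT_char n c t Hn Hc Ht) as [-> Hcq].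
      specialize (Hle (c, c) Ht). cbn beta in Hle. rewrite Hval in Hle. auto.
    + intros W HW. exists 0. split; [lra|]. split.
      * exists (0, 0). apply InT_cc; auto; try lra; try exact Hq0.
      * intros t Ht. rewrite (proj1 (HsubT 0 ltac:(lra) Hq0 t) Ht).
        rewrite Hval. lra.
Qed.
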